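(* Let $\dot{\mathcal H}$ be the point (bound-state) subspace of the Hydrogen atom Hamiltonian as described in the context, and let $0\neq|\psi\rangle\in\dot{\mathcal H}$. Then for each $0<q<1$, $D^+_{\mu_{|\psi\rangle}}(q)\le \tfrac13$.
   Context: The Hydrogen atom Hamiltonian is $H=-\Delta-\kappa/|x|$ acting in $\mathrm{L}^2(\mathbb R^3)$, $\kappa>0$. Its eigenvalues are $\lambda_n=-\Lambda/n^2$, $n=1,2,\dots$, with $\Lambda=\kappa^2/4$, each of multiplicity $n^2$, with orthonormal eigenfunctions $|n,l,m\rangle$, $l=0,\dots,n-1$, $m=-l,\dots,l$. $\dot{\mathcal H}$ denotes the closed subspace spanned by all $|n,l,m\rangle$. For $|\psi\rangle=\sum a_{n,l,m}|n,l,m\rangle\in\dot{\mathcal H}$ its spectral measure is $\mu_{|\psi\rangle}=\sum_{n,l,m}|a_{n,l,m}|^2\delta_{\lambda_n}$. For a finite positive Borel measure $\mu$ on $\mathbb R$ and $q>0$, $q\neq1$, set $I_\mu(q,\epsilon)=\int_{\{x:\mu(B(x,\epsilon))>0\}}\mu(B(x,\epsilon))^{q-1}\,d\mu(x)$ with $B(x,\epsilon)=(x-\epsilon,x+\epsilon)$, and define the upper generalized fractal dimension $D^+_\mu(q)=\limsup_{\epsilon\downarrow0}\frac{\ln I_\mu(q,\epsilon)}{(q-1)\ln\epsilon}$. *)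

(* Defs.v *)
From HB Require Import structures.
From mathcomp Require Import all_boot all_order all_algebra.
From mathcomp Require Import all_classical all_reals all_analysis.
From mathcomp Require Import complex.

Set Implicit Arguments.
Unset Strict Implicit.
Unset Printing Implicit Defensive.

Import Order.TTheory GRing.Theory Num.Theory.
Import numFieldTopology.Exports.
Local Open Scope classical_set_scope.
Local Open Scope ring_scope.

(* Eigenvalue lambda_n = - Lambda / n^2 with Lambda = kappa^2/4 (meaningful for n >= 1). *)
Definition hydrogen_eigenvalue (R : realType) (kappa : R) (n : nat) : R :=
  - (kappa ^+ 2 / 4) / (n%:R ^+ 2).

Definition sqnormC (R : realType) (z : R[i]) : R := (@complex.Re R z) ^+ 2 + (@complex.Im R z) ^+ 2.

(* sum over l = 0..n-1, m = -l..l of |a_{n,l,m}|^2 : the total mass the spectral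
   measure of psi puts at lambda_n *)
Definition level_weight (R : realType) (a : nat -> nat -> int -> R[i]) (n : nat) : R :=
  \sum_(l < n) \sum_(0 <= j < (2 * l).+1) sqnormC (a n l (j%:Z - l%:Z)).

Lemma level_weight_ge0 (R : realType) (a : nat -> nat -> int -> R[i]) (n : nat) :
  0 <= level_weight a n.
Proof.
by apply: sumr_ge0 => l _; apply: sumr_ge0 => j _; rewrite /sqnormC addr_ge0 ?sqr_ge0.
Qed.

Definition spectral_measure (R : realType) (kappa : R)
    (a : nat -> nat -> int -> R[i]) : {measure set R -> \bar R} :=
  mseries (fun k => mscale (NngNum (level_weight_ge0 a k.+1))
                           (\d_(hydrogen_eigenvalue kappa k.+1))) 0.

Definition Rball (R : realType) (x eps : R) : set R := `](x - eps), (x + eps)[.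

Definition I_mu (R : realType) (mu : {measure set R -> \bar R}) (q eps : R) : \bar R :=
  (\int[mu]_(x in [set x | (0 < mu (Rball x eps))%E])
      ((fine (mu (Rball x eps))) `^ (q - 1))%:E)%E.

Definition lnE (R : realType) (x : \bar R) : \bar R :=
  match x with
  | r%:E => (ln r)%:E
  | +oo%E => +oo%E
  | -oo%E => -oo%E
  end.

Definition Dplus (R : realType) (mu : {measure set R -> \bar R}) (q : R) : \bar R :=
  limf_esup (fun eps : R => (lnE (I_mu mu q eps) * ((q - 1) * ln eps)^-1%:E)%E)
            (0%R^'+).

(* Main.v *)
Require Import Defs.
From HB Require Import structures.
From mathcomp Require Import all_boot all_order all_algebra.
From mathcomp Require Import all_classical all_reals all_analysis.
From mathcomp Require Import complex.
From mathcomp Require Import ring lra.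
From mathcomp Require Import measurable_realfun.
Import Order.TTheory GRing.Theory Num.Theory.
Import numFieldTopology.Exports.
Local Open Scope classical_set_scope.
Local Open Scope ring_scope.

Lemma eseries_le_partial (R : realType) (u : nat -> R) (B : R) :
  (forall k, 0 <= u k) -> (forall P, \sum_(0 <= k < P) u k <= B) ->
  (\sum_(k <oo) (u k)%:E <= B%:E)%E.
Proof.
move=> u0 hP.
apply: lime_le.
  by apply: is_cvg_nneseries => n _ _; rewrite lee_fin.
by apply: nearW => P; rewrite sumEFin lee_fin.
Qed.

Lemma count_blocks (R : realType) (P Kb : nat) (w : nat -> R) (bl : nat -> nat) :
  (forall k, 0 <= w k) -> (forall k, (bl k < Kb)%N) ->
  \sum_(0 <= k < P) w k / (\sum_(0 <= j < P | bl j == bl k) w j) <= Kb%:R.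
Proof.
move=> w0 blt.
rewrite (partition_big (fun k => (Ordinal (blt k) : 'I_Kb)) xpredT) //=.
apply: (@le_trans _ _ (\sum_(b < Kb) 1)); last by rewrite sumr_const card_ord.
apply: ler_sum => b _.
set W := \sum_(0 <= j < P | bl j == b) w j.
have -> : \sum_(i <- index_iota 0 P | Ordinal (blt i) == b)
     w i / (\sum_(0 <= j < P | bl j == bl i) w j) =
     \sum_(i <- index_iota 0 P | bl i == b) w i / W.
  apply: eq_big => i; first by rewrite -val_eqE.
  by move=> /eqP Hb; rewrite /W -Hb.
rewrite -big_distrl /=.
have W0 : 0 <= W by apply: sumr_ge0.
have [->|Wn0] := eqVneq W 0; first by rewrite invr0 mulr0.
by rewrite divff.
Qed.

Lemma powR_self (R : realType) (x s : R) : 0 < x -> x * x `^ (- s) = x `^ (1 - s).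
Proof.
move=> x0; rewrite powRD; last by rewrite (gt_eqF x0) implybT.
by rewrite powRr1 // ltW.
Qed.

Lemma pointwise (R : realType) (w W t s : R) :
  0 < w -> w <= W -> 0 < t -> 0 <= s <= 1 ->
  w * W `^ (- s) <= w * t `^ (- s) + (w / W) * (t * t `^ (- s)).
Proof.
move=> w0 wW t0 /andP[s0 s1].
have W0 : 0 < W by apply: lt_le_trans wW.
have [tW|Wt] := leP t W.
  apply: ler_wpDr.
    by apply: mulr_ge0; [apply: divr_ge0; apply: ltW | apply: mulr_ge0; [apply: ltW|apply: powR_ge0]].
  rewrite ler_pM2l // !powRN lef_pV2 ?posrE ?powR_gt0 //.
  have H := @ge0_ler_powR R s s0 t W; apply: H => //; rewrite nnegrE ltW //.
apply: ler_wpDl; first by apply: mulr_ge0; [apply: ltW|apply: powR_ge0].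
have -> : w * W `^ (- s) = (w / W) * (W * W `^ (- s)).
  by rewrite mulrA divfK // gt_eqF.
rewrite ler_pM2l ?divr_gt0 // !powR_self //.
have H := @ge0_ler_powR R (1 - s) (ltac:(by rewrite subr_ge0)) W t; apply: H => //; rewrite ?nnegrE ltW //.
Qed.

Lemma group_bound (R : realType) (P Kb : nat) (w h : nat -> R) (bl : nat -> nat) (s t : R) :
  0 <= s <= 1 -> 0 < t ->
  (forall k, 0 <= w k) -> (forall k, (bl k < Kb)%N) ->
  (forall k, (k < P)%N -> 0 < w k ->
     h k <= (\sum_(0 <= j < P | bl j == bl k) w j) `^ (- s)) ->
  \sum_(0 <= k < P) w k * h k <=
     Kb%:R * (t * t `^ (- s)) + (\sum_(0 <= k < P) w k) * t `^ (- s).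
Proof.
move=> s01 t0 w0 blt Hh.
apply: (@le_trans _ _ (\sum_(0 <= k < P) (w k * t `^ (- s) +
   (w k / (\sum_(0 <= j < P | bl j == bl k) w j)) * (t * t `^ (- s))))).
  rewrite big_nat [X in _ <= X]big_nat; apply: ler_sum => k /andP[_ kP].
  have [wk0|wkpos] := eqVneq (w k) 0.
    by rewrite wk0 !mul0r add0r.
  have wk : 0 < w k by rewrite lt_neqAle eq_sym wkpos w0.
  have wW : w k <= \sum_(0 <= j < P | bl j == bl k) w j.
    rewrite big_mkcond /= (bigD1_seq k) ?mem_index_iota ?iota_uniq //= eqxx.
    rewrite lerDl sumr_ge0 // => i _; case: ifP => // _; exact: w0.
  apply: (le_trans _ (@pointwise R _ _ _ _ wk wW t0 s01)).
  by rewrite ler_pM2l // Hh.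
rewrite big_split /= -!big_distrl /= addrC lerD2r.
apply: ler_wpM2r; first by apply: mulr_ge0; [apply: ltW|apply: powR_ge0].
exact: count_blocks.
Qed.

Lemma blocks (R : realType) (L eps : R) : 0 <= L -> 0 < eps < 1 ->
  exists (bl : nat -> nat) (Kb : nat),
   [/\ (forall k, (bl k < Kb)%N),
       (forall j k, bl j = bl k ->
          `|L / (j.+1%:R)^+2 - L / (k.+1%:R)^+2| < eps) &
       Kb%:R <= (3 + L) / (eps `^ 3^-1)].
Proof.
move=> L0 /andP[e0 e1].
set u := eps `^ 3^-1.
have u0 : 0 < u by rewrite powR_gt0.
have u1 : u <= 1.
  have := @ge0_ler_powR R 3^-1 (ltac:(by rewrite invr_ge0)) eps 1.
  rewrite powR1 => H; apply: H; rewrite ?nnegrE ?ler01 ?ltW //.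
have u3 : eps = u ^+ 3.
  by rewrite /u -powR_mulrn ?powR_ge0 // -powRrM mulVf ?pnatr_eq0 // powRr1 // ltW.
set iu := u^-1.
have iuu : iu * u = 1 by rewrite mulVf // gt_eqF.
have iu1 : 1 <= iu by rewrite /iu invr_ge1 ?unitfE ?gt_eqF.
set N := (Num.trunc iu).+1.
have NgtR : iu < N%:R by rewrite /N truncnS_gt.
have NleR : N%:R <= iu + 1.
  by rewrite /N -addn1 natrD lerD2r truncn_le (le_trans ler01 iu1).
set g := fun k : nat => L / (k.+1%:R)^+2.
have gpos : forall k, 0 <= g k by move=> k; rewrite /g divr_ge0 // sqr_ge0.
have gdec : forall j k, (j <= k)%N -> g k <= g j.
  move=> j k jk; rewrite /g ler_wpM2l // lef_pV2 ?posrE ?exprn_gt0 ?ltr0Sn //.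
  by rewrite lerXn2r ?nnegrE // ler_nat.
pose x := fun k : nat => (g N - g k) / eps.
have x0 : forall k, (N <= k)%N -> 0 <= x k.
  by move=> k Nk; rewrite /x divr_ge0 ?subr_ge0 ?gdec // ltW.
pose bl := fun k : nat => if (k < N)%N then k else (N + Num.trunc (x k))%N.
set T := Num.trunc (g N / eps).
exists bl, (N + T.+1)%N; split.
- move=> k; rewrite /bl; case: ifP => kN.
    by apply: (leq_trans kN); rewrite leq_addr.
  rewrite ltn_add2l ltnS le_truncn // ler_pM2r ?invr_gt0 //.
  by rewrite lerBlDr lerDl gpos.
- move=> j k; rewrite /bl.
  have hx : forall m, (N <= m)%N -> (Num.trunc (x m))%:R <= x m < (Num.trunc (x m)).+1%:R.
    by move=> m Nm; apply: truncn_itv; apply: x0.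
  case: ifP => jN; case: ifP => kN.
  + by move=> ->; rewrite subrr normr0.
  + move=> jk; have : (N <= j)%N by rewrite jk leq_addr.
    by rewrite leqNgt jN.
  + move=> jk; have : (N <= k)%N by rewrite -jk leq_addr.
    by rewrite leqNgt kN.
  + move/eqP; rewrite eqn_add2l => /eqP hjk.
    have := hx j; rewrite leqNgt jN => /(_ isT) /andP[hj1 hj2].
    have := hx k; rewrite leqNgt kN => /(_ isT) /andP[hk1 hk2].
    rewrite hjk in hj1 hj2.
    have hd : `|x k - x j| < 1 by rewrite ltr_norml; apply/andP; split; lra.
    have -> : g j - g k = (x k - x j) * eps.
      by rewrite /x -mulrBl; field; rewrite gt_eqF.
    by rewrite normrM (gtr0_norm e0) -[X in _ < X]mul1r ltr_pM2r.
- have hT : T%:R <= g N / eps by rewrite /T truncn_le divr_ge0 // ?gpos // ltW.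
  have hg : g N / eps <= L * iu.
    have h1 : iu <= N.+1%:R by rewrite -addn1 natrD ler_wpDr ?ler01 // ltW.
    have h2 : 0 <= iu by apply: le_trans iu1.
    have h3 : iu ^+ 2 <= N.+1%:R ^+ 2 by rewrite lerXn2r ?nnegrE // ltW.
    have hd : u <= N.+1%:R ^+ 2 * eps.
      have e : iu ^+ 2 * u ^+ 3 = (iu * u) ^+ 2 * u by ring.
      rewrite iuu expr1n mul1r in e.
      rewrite u3; apply: le_trans (_ : iu ^+ 2 * u ^+ 3 <= _).
        by rewrite e.
      by rewrite ler_wpM2r // exprn_ge0 // ltW.
    have -> : g N / eps = L * (N.+1%:R ^+ 2 * eps)^-1.
      by rewrite /g /= [in RHS]invfM mulrA.
    rewrite ler_wpM2l // /iu lef_pV2 ?posrE //.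
    by rewrite mulr_gt0 // exprn_gt0 // ltr0Sn.
  rewrite natrD -addn1 natrD.
  have -> : (3 + L) / u = 3 * iu + L * iu by rewrite /iu; ring.
  lra.
Qed.

Section M.
Variables (R : realType) (kappa : R) (a : nat -> nat -> int -> R[i]).
Let mu := spectral_measure kappa a.
Let w k := level_weight a k.+1.
Let lam k := hydrogen_eigenvalue kappa k.+1.

Lemma muE (A : set R) : mu A = (\sum_(k <oo) ((w k)%:E * (\1_A (lam k))%:E))%E.
Proof. by []. Qed.

Lemma Rball_sym (x y eps : R) : Rball x eps y <-> Rball y eps x.
Proof.
rewrite /Rball /= !in_itv /=; split => /andP[h1 h2]; apply/andP; split; lra.
Qed.

Lemma FE (eps x : R) : mu (Rball x eps) =
  (\sum_(k <oo) ((w k)%:E * (\1_(Rball (lam k) eps) x)%:E))%E.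
Proof.
rewrite muE; apply: eq_eseriesr => k _; congr (_ * (_)%:E)%E.
rewrite !indicE; congr (_%:R).
by case: (boolP (lam k \in _)) => h; case: (boolP (x \in _)) => h2 //; exfalso; [move: h2 | move: h]; move/negP; apply; move: h || move: h2; move=> /set_mem/Rball_sym/mem_set.
Qed.

Definition Fb (eps x : R) : \bar R := mu (Rball x eps).

Lemma F_meas (eps : R) : measurable_fun [set: R] (Fb eps).
Proof.
rewrite (_ : Fb eps = fun x =>
   (\sum_(k <oo | k \in xpredT) ((w k)%:E * (\1_(Rball (lam k) eps) x)%:E))%E).
  apply: ge0_emeasurable_sum.
    by move=> k x _ _; rewrite -EFinM lee_fin mulr_ge0 ?level_weight_ge0.
  move=> k _; apply/measurable_EFinP => /=.
  apply: measurable_funM => //; apply: measurable_indic.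
  exact: measurable_itv.
by apply/funext => x; rewrite /Fb FE.
Qed.


Definition Dset (eps : R) := [set x : R | (0 < Fb eps x)%E].

Lemma Dset_meas eps : measurable (Dset eps).
Proof.
have := @measurable_lte _ R R setT measurableT (cst 0%E) (Fb eps) (measurable_cst _) (F_meas eps).
by rewrite setTI.
Qed.

Definition gq (q eps x : R) : \bar R := ((fine (Fb eps x)) `^ (q - 1))%:E.

Lemma gq_meas q eps : measurable_fun [set: R] (gq q eps).
Proof.
apply/measurable_EFinP => /=.
change (measurable_fun [set: R] ((fun y : R => y `^ (q - 1)) \o (fine \o Fb eps))).
apply: measurableT_comp; first exact: measurable_powR.
apply: measurableT_comp; first exact: fine_measurable.
exact: F_meas.
Qed.

Lemma I_muE q eps : I_mu mu q eps =
  (\sum_(k <oo) ((w k)%:E * (\d_(lam k) (Dset eps) * gq q eps (lam k))))%E.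
Proof.
have -> : I_mu mu q eps = (\int[mu]_(x in Dset eps) gq q eps x)%E by [].
rewrite /mu /spectral_measure.
rewrite ge0_integral_measure_series.
- apply: eq_eseriesr => k _.
  rewrite ge0_integral_mscale /=.
  + by rewrite integral_dirac //; [exact: Dset_meas | exact: measurable_funS (gq_meas q eps)].
  + exact: Dset_meas.
  + exact: measurable_funS (gq_meas q eps).
  + by move=> x _; rewrite lee_fin powR_ge0.
- exact: Dset_meas.
- by move=> x _; rewrite lee_fin powR_ge0.
- exact: measurable_funS (gq_meas q eps).
Qed.


Lemma F_le_total (eps x M : R) : (\sum_(k <oo) (w k)%:E)%E = M%:E -> (Fb eps x <= M%:E)%E.
Proof.
move=> hM; rewrite /Fb FE -hM.
apply: lee_nneseries.
  by move=> k _ _; rewrite -EFinM lee_fin mulr_ge0 ?level_weight_ge0.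
move=> k _; rewrite -EFinM lee_fin indicE.
case: (_ \in _); rewrite ?mulr1 ?mulr0 //; exact: level_weight_ge0.
Qed.

Lemma F_ge0 (eps x : R) : (0 <= Fb eps x)%E.
Proof. exact: measure_ge0. Qed.

Lemma I_bound (q eps M : R) : 0 < q < 1 -> 0 < eps < 1 ->
  (\sum_(k <oo) (w k)%:E)%E = M%:E ->
  exists r, I_mu mu q eps = r%:E /\ 0 <= r /\
    r <= (3 + kappa ^+ 2 / 4 + M) * (eps `^ 3^-1) `^ (q - 1).
Proof.
move=> /andP[q0 q1] e01 hM.
set L := kappa ^+ 2 / 4.
have L0 : 0 <= L by rewrite /L divr_ge0 ?sqr_ge0.
have [bl [Kb [blt blk KbB]]] := @blocks R L eps L0 e01.
move: e01 => /andP[e0 e1].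
set u := eps `^ 3^-1.
have u0 : 0 < u by rewrite powR_gt0.
set s := 1 - q.
have s01 : 0 <= s <= 1 by rewrite /s subr_ge0 ltW //= lerBlDr lerDl ltW.
have sE : - s = q - 1 by rewrite /s opprB.
pose h k := (\1_(Dset eps) (lam k)) * fine (Fb eps (lam k)) `^ (q - 1).
have h0 : forall k, 0 <= h k.
  by move=> k; rewrite /h mulr_ge0 ?powR_ge0 // indicE; case: (_ \in _).
have w0 : forall k, 0 <= w k by move=> k; exact: level_weight_ge0.
have termE : forall k, ((w k)%:E * (\d_(lam k) (Dset eps) * gq q eps (lam k)))%E = (w k * h k)%:E.
  by move=> k; rewrite diracE /gq /h indicE -!EFinM.
have Msum : forall P, \sum_(0 <= k < P) w k <= M.
  move=> P; rewrite -lee_fin -hM -sumEFin.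
  by apply: nneseries_lim_ge => n _ _; rewrite lee_fin.
have Ffin : forall x, Fb eps x = (fine (Fb eps x))%:E.
  move=> x; rewrite fineK // ge0_fin_numE ?F_ge0 //.
  exact: (le_lt_trans (F_le_total eps x _ hM) (ltry M)).
have Hser : (\sum_(k <oo) (w k * h k)%:E <= ((3 + L + M) * u `^ (q - 1))%:E)%E.
  apply: eseries_le_partial => [k|P]; first by rewrite mulr_ge0.
  apply: le_trans (@group_bound R P Kb w h bl s u s01 u0 w0 blt _) _.
    move=> k kP wk.
    set W := \sum_(0 <= j < P | bl j == bl k) w j.
    have wW : w k <= W.
      rewrite /W big_mkcond /= (bigD1_seq k) ?mem_index_iota ?iota_uniq //= eqxx.
      rewrite lerDl sumr_ge0 // => i _; case: ifP => // _; exact: w0.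
    have Wpos : 0 < W by apply: lt_le_trans wW.
    rewrite /h indicE; case: (_ \in _); last by rewrite mul0r powR_ge0.
    rewrite mul1r sE.
    have WF : W <= fine (Fb eps (lam k)).
      rewrite -lee_fin -Ffin /Fb FE.
      apply: le_trans (nneseries_lim_ge P _) .
        under eq_bigr do rewrite -EFinM.
        rewrite sumEFin lee_fin /W big_mkcond /=.
        apply: ler_sum => j _; case: ifP => hj; last first.
          by rewrite mulr_ge0 ?w0 // indicE; case: (_ \in _).
        rewrite indicE mem_set ?mulr1 //.
        have := blk j k (eqP hj); rewrite ltr_norml => /andP[hb1 hb2].
        rewrite /Rball /= in_itv /= /lam /hydrogen_eigenvalue -/L !mulNr.
        set A := L / j.+1%:R ^+ 2 in hb1 hb2 *; set B := L / k.+1%:R ^+ 2 in hb1 hb2 *.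
        apply/andP; split; lra.
      by move=> n _ _; rewrite -EFinM lee_fin mulr_ge0 ?w0 // indicE; case: (_ \in _).
    rewrite -sE !powRN lef_pV2 ?posrE ?powR_gt0 //; last exact: lt_le_trans WF.
    have H := @ge0_ler_powR R s (ltac:(by case/andP: s01)) W (fine (Fb eps (lam k))).
    by apply: H; [rewrite nnegrE ltW | rewrite nnegrE (le_trans (ltW Wpos) WF) | exact: WF].
  rewrite sE.
  set p := u `^ (q - 1).
  have p0 : 0 <= p by apply: powR_ge0.
  have hK : Kb%:R * u <= 3 + L.
    have := KbB; rewrite -/u => hk.
    apply: le_trans (_ : (3 + L) / u * u <= _).
      by rewrite ler_wpM2r // ltW.
    by rewrite divfK // gt_eqF.
  rewrite mulrA mulrDl; apply: lerD; apply: ler_wpM2r => //.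
have IE : I_mu mu q eps = (\sum_(k <oo) (w k * h k)%:E)%E.
  by rewrite I_muE; apply: eq_eseriesr => k _; exact: termE.
have I0 : (0 <= \sum_(k <oo) (w k * h k)%:E)%E.
  by apply: nneseries_ge0 => n _ _; rewrite lee_fin mulr_ge0.
have Ifin : (\sum_(k <oo) (w k * h k)%:E)%E \is a fin_num.
  by rewrite ge0_fin_numE // (le_lt_trans Hser (ltry _)).
exists (fine (I_mu mu q eps)); rewrite IE; split; first by rewrite fineK.
split; first exact: fine_ge0.
by rewrite -lee_fin fineK.
Qed.

End M.

Lemma limf_esup_le (R : realType) (f : R -> \bar R) (V : set R) y :
  (0%R^'+) V -> (forall x, V x -> (f x <= y)%E) -> (limf_esup f (0%R^'+) <= y)%E.
Proof.
move=> HV Hf.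
apply: (@le_trans _ _ (ereal_sup (f @` V))).
  by apply: ereal_inf_lbound; exists V.
by apply: ge_ereal_sup => _ [x Vx <-]; apply: Hf.
Qed.

Lemma Dplus_le (R : realType) (mu : {measure set R -> \bar R}) (q C : R) :
  0 < q < 1 -> 1 <= C ->
  (forall eps, 0 < eps < 1 -> exists r, I_mu mu q eps = r%:E /\ 0 <= r /\
       r <= C * (eps `^ (3^-1)) `^ (q - 1)) ->
  (Dplus mu q <= (1 / 3)%:E)%E.
Proof.
move=> /andP[q0 q1] C1 Hb.
set s := 1 - q.
have s0 : 0 < s by rewrite /s subr_gt0.
apply/lee_addgt0Pr => d d0.
pose r0 := expR (- (ln C / (d * s))).
have r0gt : 0 < r0 by rewrite /r0 expR_gt0.
have r0le : r0 <= 1.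
  rewrite /r0 -expR0 ler_expR oppr_le0 divr_ge0 ?ln_ge0 //.
  by rewrite mulr_ge0 // ltW.
rewrite /Dplus.
apply: (@limf_esup_le _ _ [set e : R | 0 < e < r0]) => [|e].
  near=> x; apply/andP; split; near: x; first exact: nbhs_right_gt.
  exact: nbhs_right_lt.
move=> /andP[e0 er].
have e1 : e < 1 by apply: lt_le_trans er r0le.
have [r [-> [r0' rle]]] := Hb e (ltac:(by apply/andP; split)).
have lne : ln e < 0 by apply: ln_lt0; apply/andP.
have dpos : 0 < (q - 1) * ln e by rewrite -mulrNN mulr_gt0 // oppr_gt0 ?subr_lt0.
rewrite /= -EFinM lee_fin.
have key : ln r <= ln C + (q - 1) * (3^-1 * ln e).
  have rhs0 : 0 <= ln C + (q - 1) * (3^-1 * ln e).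
    rewrite addr_ge0 ?ln_ge0 // mulr_le0 ?subr_le0 ?ltW //.
    by rewrite pmulr_rlt0 // invr_gt0.
  have [->|rpos] := eqVneq r 0; first by rewrite ln0.
  have rp : 0 < r by rewrite lt_neqAle eq_sym rpos r0'.
  have up : 0 < (e `^ 3^-1) `^ (q - 1) by rewrite powR_gt0 // powR_gt0.
  apply: le_trans (_ : ln (C * (e `^ 3^-1) `^ (q - 1)) <= _).
    rewrite ler_ln ?posrE // mulr_gt0 //; exact: lt_le_trans ltr01 C1.
  rewrite lnM ?posrE //; last exact: lt_le_trans ltr01 C1.
  by rewrite !ln_powR.
rewrite ler_pdivrMr //.
apply: le_trans key _.
have -> : (1 / 3 + d) * ((q - 1) * ln e) = (q - 1) * (3^-1 * ln e) + d * ((q - 1) * ln e).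
  by ring.
rewrite addrC lerD2l.
have : ln C <= d * ((q - 1) * ln e).
  have : ln e < - (ln C / (d * s)).
    by rewrite -ltr_expR lnK ?posrE.
  rewrite ltrNr => h.
  have : ln C / (d * s) < - ln e := h.
  rewrite ltr_pdivrMr ?mulr_gt0 // => h2.
  apply: ltW; apply: (lt_le_trans h2).
  by rewrite /s le_eqVlt; apply/orP; left; apply/eqP; ring.
exact id.
Unshelve. all: by end_near.
Qed.

Theorem proposition1 (R : realType) (kappa : R) (a : nat -> nat -> int -> R[i]) :
  0 < kappa ->
  (\sum_(k <oo) (level_weight a k.+1)%:E < +oo)%E ->
  (exists (n l : nat) (m : int),
      [/\ (0 < n)%N, (l < n)%N, (`|m| <= l)%N & a n l m != 0]) ->
  forall q : R, 0 < q < 1 ->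
    (Dplus (spectral_measure kappa a) q <= (1 / 3)%:E)%E.
Proof.
move=> _ hfin _ q q01.
have S0 : (0 <= \sum_(k <oo) (level_weight a k.+1)%:E)%E.
  by apply: nneseries_ge0 => n _ _; rewrite lee_fin level_weight_ge0.
set M := fine (\sum_(k <oo) (level_weight a k.+1)%:E)%E.
have hM : (\sum_(k <oo) (level_weight a k.+1)%:E)%E = M%:E.
  by rewrite /M fineK // ge0_fin_numE.
have M0 : 0 <= M by rewrite /M fine_ge0.
apply: (@Dplus_le R _ q (3 + kappa ^+ 2 / 4 + M) q01).
  have : 0 <= kappa ^+ 2 / 4 by rewrite divr_ge0 ?sqr_ge0.
  lra.
move=> eps e01.
exact: (@I_bound R kappa a q eps M q01 e01 hM).
Qed.
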